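(* Let $(K,C,S)$ be a layered simplicial complex and let $(K,C,S)\searrow(K-\{f,p\},C,S-\{f,p\})$ be an elementary $S$-collapse of a principal simplex $p\in S$ using the free face $f\in S$ of $p$. Then the freely orthogonal deformation retraction $H:|K|\times I\to|K|$ associated to $p$ and $f$ satisfies $H_t(|K|-|S|)=|K|-|S|$ and $H_t(|S|)\subseteq|S|$ for all $t\in I$.
   Context: A simplicial complex is a set of finite nonempty sets (simplices) closed under passing to nonempty subsets (faces); $|K|$ is its geometric realization and $|s|$ the closed geometric simplex. A simplex is principal in $K$ if it is not a proper face of any simplex of $K$; $f$ is free in $K$ if it is a proper face of a principal simplex $p$ and of no other simplex of $K$. A layered simplicial complex is $(K,C,S)$ with $C,S$ disjoint subcomplexes of $K$. An elementary $S$-collapse uses $p\in S$ principal in $K$ and a face $f$ of $p$ free in $K$. Freely orthogonal deformation retraction: let $p$ be principal in $K$ with free face $f$, let $v$ be the vertex of $p$ not in $f$ and $f_1,\dots,f_m$ the vertices of $f$ ($m\ge1$). Identify $|p|$ via barycentric coordinates with $\{x\in\mathbb R^m: x_i\ge0,\ \sum x_i\le1\}$ ($v\mapsto0$, $f_i\mapsto e_i$). Define $r:|p|\to|p|$ by $r(x)=(x_1-x_j,\dots,x_m-x_j)$ where $x_j=\min\{x_1,\dots,x_m\}$, and $H:|K|\times I\to|K|$ by $H(x,t)=(1-t)x+t\,r(x)$ for $x\in|p|$ and $H(x,t)=x$ for $x\in|K|-|p|$; $H_t=H(\cdot,t)$. *)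

(* Defs.v *)
From HB Require Import structures.
From mathcomp Require Import all_boot all_order all_algebra.
From mathcomp Require Import finmap.
From mathcomp Require Import boolp classical_sets reals.
Set Implicit Arguments. Unset Strict Implicit. Unset Printing Implicit Defensive.
Import Order.TTheory GRing.Theory Num.Theory.
Local Open Scope ring_scope.
Local Open Scope classical_set_scope.


Section Defs.
Variable V : choiceType.

Definition is_complex (K : set {fset V}) : Prop :=
  forall s, K s -> s != fset0%fset /\
    (forall t : {fset V}, fsubset t s -> t != fset0%fset -> K t).

Definition subcomplex (L K : set {fset V}) : Prop :=
  is_complex L /\ (L `<=` K)%classic.

Definition layered (K C S : set {fset V}) : Prop :=
  [/\ is_complex K, subcomplex C K, subcomplex S K & (C `&` S = set0)%classic].

Definition principal (K : set {fset V}) (p : {fset V}) : Prop :=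
  K p /\ forall s, K s -> ~ fproper p s.

Definition free_face (K : set {fset V}) (f p : {fset V}) : Prop :=
  [/\ K f, principal K p, fproper f p &
      forall s, K s -> fproper f s -> s = p].

Definition elementary_S_collapse (K C S : set {fset V}) (f p : {fset V}) :=
  [/\ layered K C S, S p, S f & free_face K f p].

Variable R : realType.

(* Points are given by barycentric coordinates x : V -> R. *)
Definition in_simplex (s : {fset V}) (x : V -> R) : Prop :=
  [/\ forall w, 0 <= x w, forall w, w \notin s -> x w = 0 &
      \sum_(w <- s) x w = 1].

Definition realization (K : set {fset V}) : set (V -> R) :=
  [set x | exists2 s, K s & in_simplex s x].

(* min_j x_j over the vertices of f (for x in |p| all x_j <= 1, so the
   initial value 1 does not affect the minimum) *)
Definition fmin (f : {fset V}) (x : V -> R) : R :=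
  \big[Num.min/1]_(w <- f) x w.

(* The retraction r : |p| -> |p| in barycentric coordinates: the
   f_i-coordinate is x_i - x_j, the remaining vertex v of p gets
   1 - sum of the others, all other coordinates are 0. *)
Definition fo_r (p f : {fset V}) (x : V -> R) : V -> R :=
  fun w => if w \in f then x w - fmin f x
           else if w \in p then 1 - \sum_(u <- f) (x u - fmin f x)
           else 0.

Definition fo_H (p f : {fset V}) (x : V -> R) (t : R) : V -> R :=
  if `[< in_simplex p x >] then (fun w => (1 - t) * x w + t * fo_r p f x w)
  else x.

End Defs.

(* Main.v *)
Require Import Defs.
From HB Require Import structures.
From mathcomp Require Import all_boot all_order all_algebra.
From mathcomp Require Import finmap.
From mathcomp Require Import boolp classical_sets reals.
Import Order.TTheory GRing.Theory Num.Theory.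
Local Open Scope ring_scope.
Local Open Scope classical_set_scope.

Section H.
Variables (R : realType) (V : choiceType).

Lemma bigmin_le (x : V -> R) (s : seq V) w : w \in s ->
  \big[Num.min/1]_(u <- s) x u <= x w.
Proof.
elim: s => [//|a s IH]; rewrite inE big_cons ge_min => /orP[/eqP->|/IH->].
  by rewrite lexx.
by rewrite orbT.
Qed.

Lemma bigmin_ge0 (x : V -> R) (s : seq V) : (forall w, 0 <= x w) ->
  0 <= \big[Num.min/1]_(u <- s) x u.
Proof.
move=> h; elim: s => [|a s IH]; first by rewrite big_nil.
by rewrite big_cons le_min h IH.
Qed.

Lemma conv_in (s : {fset V}) (a b : V -> R) t : 0 <= t <= 1 ->
  in_simplex s a -> in_simplex s b ->
  in_simplex s (fun w => (1 - t) * a w + t * b w).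
Proof.
move=> /andP[t0 t1] [a0 a1 a2] [b0 b1 b2]; split.
- by move=> w; rewrite addr_ge0 // mulr_ge0 // subr_ge0.
- by move=> w ws; rewrite a1 // b1 // !mulr0 addr0.
- by rewrite big_split /= -!mulr_sumr a2 b2 !mulr1 subrK.
Qed.

Lemma r_in (p f : {fset V}) v (x : V -> R) : v \notin f -> p = (v |` f)%fset ->
  in_simplex p x -> in_simplex p (fo_r p f x).
Proof.
move=> vf pE [x0 x1 x2].
have m0 : 0 <= fmin f x by apply: bigmin_ge0.
have mle : forall w, w \in f -> fmin f x <= x w by move=> w; apply: bigmin_le.
have sf : \sum_(u <- f) (x u - fmin f x) <= 1.
  apply: (@le_trans _ _ (\sum_(u <- f) x u)).
    by apply: ler_sum => i _; rewrite lerBlDr lerDl.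
  move: x2; rewrite pE big_fsetU1 //= => <-; by rewrite lerDr.
have sE : \sum_(w <- f) fo_r p f x w = \sum_(u <- f) (x u - fmin f x).
  by rewrite big_seq [RHS]big_seq; apply: eq_bigr => i /= hi; rewrite /fo_r hi.
split.
- move=> w; rewrite /fo_r; case: ifP => wf; first by rewrite subr_ge0 mle.
  by case: ifP => // _; rewrite subr_ge0.
- move=> w wp; rewrite /fo_r; have wf : w \notin f.
    by apply: contra wp; rewrite pE => wf; rewrite in_fset1U wf orbT.
  by rewrite (negbTE wf) (negbTE wp).
- rewrite pE big_fsetU1 //= -pE sE /fo_r (negbTE vf) pE fsetU11 /=.
  by rewrite subrK.
Qed.
End H.

Lemma Hself (R' : realType) (V' : choiceType) (p f : {fset V'}) (x : V' -> R') t :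
  ~ in_simplex p x -> fo_H p f x t = x.
Proof. by move=> h; rewrite /fo_H asboolF. Qed.

Theorem lemma5p3 (R : realType) (V : choiceType) (K C S : set {fset V})
    (f p : {fset V}) :
  elementary_S_collapse K C S f p ->
  forall t : R, 0 <= t <= 1 ->
    [set fo_H p f x t | x in (realization K `\` realization S : set (V -> R))]
      = realization K `\` realization S /\
    [set fo_H p f x t | x in (realization S : set (V -> R))] `<=` realization S.
Proof.
move=> [[cK _ _ _] Sp Sf [Kf [Kp _] fp ffree]] t ht.
have notp : forall x : V -> R, ~ realization S x -> ~ in_simplex p x.
  by move=> x nS hx; apply: nS; exists p.
split.
  apply/seteqP; split => x.
    by case=> y [Ky nSy] <-; rewrite Hself //; exact: notp.
  by move=> [Kx nSx]; exists x => //; rewrite Hself //; exact: notp.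
move: fp; rewrite fproperE => /andP[fsp /fsubsetPn[v vp vf]].
have pE : p = (v |` f)%fset.
  have f1p : fsubset (v |` f)%fset p by rewrite fsubUset fsub1set vp fsp.
  apply/esym/ffree.
    apply: (proj2 (cK p Kp)) => //.
    by apply/negP => /eqP h; move: (fset1U1 v f); rewrite h inE.
  by rewrite fproperE fsubsetU1 /=; apply/fsubsetPn; exists v => //; rewrite fset1U1.
move=> _ [x Sx <-].
have [hp|hp] := pselect (in_simplex p x); last by rewrite Hself.
exists p => //; rewrite /fo_H asboolT //.
apply: conv_in => //. exact: (@r_in _ _ p f v x vf pE hp).
Qed.
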